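(* Let $\sigma$ be the continuous schedule constructed from an optimal solution $\{y^F_j\}$ of $\mathsf{LP}_\mathsf{primal}$ as described in the context, and for $\lambda\in(0,1]$ let $\sigma^\lambda$ be its stretch by factor $1/\lambda$. If $\lambda$ is drawn at random from $[0,1]$ with probability density $f(v)=2v$, then $$\mathbb{E}\Big[\sum_{j\in J} w_j\, C_{\sigma^\lambda}(j)\Big]\ \le\ 2\sum_{j\in J} w_j\int_0^1 \tilde C_j(v)\,dv .$$
   Context: Co-flow scheduling: $m$ input ports, $m$ output ports, jobs $j\in J$ with weights $w_j\ge0$, integer release times $r_j\ge0$, and nonnegative integer demands $d^j_{io}$ (packets to send from input port $i$ to output port $o$). In each integer time slot $t$ (the interval $[t-1,t)$) each input port sends and each output port receives at most one packet; packets of $j$ may only be sent in slots $t>r_j$. Let $T$ be a positive integer time horizon. A configuration for job $j$ is a set $F$ of triples $(i,o,t)$ with $i,o\in[m]$, $t\in\{r_j+1,\dots,T\}$, such that for each $(i,o)$ exactly $d^j_{io}$ triples of $F$ have ports $(i,o)$, and for each $(i,t)$ at most one triple of $F$ has input port $i$ and time $t$, and for each $(o,t)$ at most one triple has output port $o$ and time $t$. Let $\mathcal F(j)$ be the set of configurations of $j$ and $C^F_j=\max\{t:(i,o,t)\in F\}$. $\mathsf{LP}_\mathsf{primal}$ is: minimize $\sum_j w_j\sum_{F\in\mathcal F(j)}C^F_j y^F_j$ subject to $\sum_{F\in\mathcal F(j)}y^F_j\ge1$ for all $j$; $\sum_{j,o}\sum_{F\in\mathcal F(j):(i,o,t)\in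 F}y^F_j\le1$ for all $i\in[m],t\in[T]$; $\sum_{j,i}\sum_{F\in\mathcal F(j):(i,o,t)\in F}y^F_j\le1$ for all $o\in[m],t\in[T]$; $y\ge0$. Given an optimal solution $y$, set $x^{jt}_{io}=\sum_{F\in\mathcal F(j):(i,o,t)\in F}y^F_j$. The continuous schedule $\sigma$ transfers data of job $j$ from $i$ to $o$ at rate $\sigma_{io,j}(\tau)=x^{jt}_{io}$ for all $\tau\in[t-1,t)$ (realized, via a Birkhoff–von Neumann decomposition of the fractional matching of slot $t$, by integral matchings spread uniformly over $[t-1,t)$). For $v\in[0,1]$, $\tilde C_j(v)$ is the earliest time $\tau$ such that $\int_0^\tau\sigma_{io,j}(s)\,ds\ge v\,d^j_{io}$ for all $i,o$. The stretched schedule $\sigma^\lambda$ schedules in $[\tau_1/\lambda,\tau_2/\lambda)$ whatever matching $\sigma$ schedules in $[\tau_1,\tau_2)$; thus the amount of job $j$'s $(i,o)$ data transferred by time $\tau$ in $\sigma^\lambda$ is $\frac1\lambda\int_0^{\lambda\tau}\sigma_{io,j}(s)\,ds$. $C_{\sigma^\lambda}(j)$ is the earliest time at which, in $\sigma^\lambda$, at least $d^j_{io}$ units of job $j$'s data have been transferred from $i$ to $o$ for every pair $(i,o)$. *)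

(* Defs.v *)
From HB Require Import structures.
From mathcomp Require Import all_boot all_order all_algebra.
From mathcomp Require Import all_classical all_reals all_analysis.
Set Implicit Arguments. Unset Strict Implicit. Unset Printing Implicit Defensive.
Import Order.TTheory GRing.Theory Num.Theory.
Local Open Scope classical_set_scope.
Local Open Scope ring_scope.

(* A triple (i, o, t) : 'I_m * 'I_m * 'I_T denotes input port i, output port o
   and time slot t+1 (so slot t+1 is the interval [t, t+1)). *)
Definition triple (m T : nat) := ('I_m * 'I_m * 'I_T)%type.

Section Coflow.
Variables (R : realType) (m T : nat) (J : finType).
Variables (w : J -> R) (r : J -> nat) (d : J -> 'I_m -> 'I_m -> nat).

Definition config (j : J) (F : {set triple m T}) : bool :=
  [&& [forall x in F, r j <= (x.2 : nat)],
      [forall i : 'I_m, forall o : 'I_m,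
         #|[set x in F | (x.1.1 == i) && (x.1.2 == o)]| == d j i o],
      [forall i : 'I_m, forall t : 'I_T,
         #|[set x in F | (x.1.1 == i) && (x.2 == t)]| <= 1] &
      [forall o : 'I_m, forall t : 'I_T,
         #|[set x in F | (x.1.2 == o) && (x.2 == t)]| <= 1]]%N.

(* C^F_j : the last slot used by F (slot of ordinal t is t+1) *)
Definition confC (F : {set triple m T}) : nat := (\max_(x in F) (x.2 : nat).+1)%N.

Definition lp_obj (y : J -> {set triple m T} -> R) : R :=
  \sum_(j : J) w j * \sum_(F | config j F) (confC F)%:R * y j F.

Definition lp_feasible (y : J -> {set triple m T} -> R) : Prop :=
  [/\ (forall j F, config j F -> 0 <= y j F),
      (forall j, 1 <= \sum_(F | config j F) y j F),
      (forall (i : 'I_m) (t : 'I_T),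
         \sum_(j : J) \sum_(o : 'I_m)
            \sum_(F | config j F && ((i, o, t) \in F)) y j F <= 1) &
      (forall (o : 'I_m) (t : 'I_T),
         \sum_(j : J) \sum_(i : 'I_m)
            \sum_(F | config j F && ((i, o, t) \in F)) y j F <= 1)].

Definition lp_optimal (y : J -> {set triple m T} -> R) : Prop :=
  lp_feasible y /\ forall y', lp_feasible y' -> lp_obj y <= lp_obj y'.

Definition xval (y : J -> {set triple m T} -> R) (j : J) (i o : 'I_m) (t : 'I_T) : R :=
  \sum_(F | config j F && ((i, o, t) \in F)) y j F.

(* rate sigma_{io,j}(tau): x^{jt}_{io} on [t-1, t) for slots t = 1..T, 0 elsewhere *)
Definition sigma (y : J -> {set triple m T} -> R) (j : J) (i o : 'I_m) (tau : R) : R :=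
  \sum_(t : 'I_T) (if ((t : nat)%:R <= tau) && (tau < (t : nat).+1%:R)
                   then xval y j i o t else 0).

Definition transferred (y : J -> {set triple m T} -> R) (j : J) (i o : 'I_m) (tau : R) : R :=
  Rintegral lebesgue_measure `[0, tau] (sigma y j i o).

Definition Ctilde (y : J -> {set triple m T} -> R) (j : J) (v : R) : R :=
  inf [set tau : R | 0 <= tau /\
        forall i o : 'I_m, v * (d j i o)%:R <= transferred y j i o tau].

(* C_{sigma^lambda}(j): completion time of j in the stretched schedule, where the
   amount of (i,o) data of j transferred by time tau is
   (1/lambda) int_0^{lambda tau} sigma_{io,j}. *)
Definition Cstretch (y : J -> {set triple m T} -> R) (lam : R) (j : J) : R :=
  inf [set tau : R | 0 <= tau /\
        forall i o : 'I_m, (d j i o)%:R <= lam^-1 * transferred y j i o (lam * tau)].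

End Coflow.

(* Main.v *)
Require Import Defs.
From HB Require Import structures.
From mathcomp Require Import all_boot all_order all_algebra.
From mathcomp Require Import all_classical all_reals all_analysis.
From mathcomp Require Import measurable_realfun.
Import Order.TTheory GRing.Theory Num.Theory.

Local Open Scope classical_set_scope.
Local Open Scope ring_scope.

Section H.
Context {R : realType}.

Lemma inf_ge0_gen (A : set R) : (forall x, A x -> 0 <= x) -> 0 <= inf A.
Proof.
move=> A0; have [->|/set0P[a Aa]] := eqVneq A set0; first by rewrite inf0.
by apply: lb_le_inf; [exists a | move=> x /A0].
Qed.

Lemma le_inf_sub (A B : set R) : B `<=` A -> B !=set0 ->
  (forall x, A x -> 0 <= x) -> inf A <= inf B.
Proof.
move=> BA B0 A0; apply: lb_le_inf => // x Bx.
apply: ge_inf; last exact: BA.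
by exists 0 => z /A0.
Qed.

Lemma inf_scale (A : set R) c : 0 < c -> (forall x, A x -> 0 <= x) ->
  inf [set t | A (c * t)] = c^-1 * inf A.
Proof.
move=> c0 A0; have [->|/set0P[a Aa]] := eqVneq A set0.
  by rewrite inf0 mulr0.
have hlA : has_lbound A by exists 0 => z /A0.
have hB : [set t | A (c * t)] (c^-1 * a) by rewrite /= mulrA divff ?gt_eqF // mul1r.
have hlB : has_lbound [set t | A (c * t)].
  exists 0 => z /A0; by rewrite pmulr_rge0.
apply: (@mulfI _ c); first by rewrite gt_eqF.
rewrite mulrA divff ?gt_eqF // mul1r; apply/le_anti/andP; split.
- apply: lb_le_inf; first by exists a.
  move=> x Ax; rewrite -ler_pdivlMl //.
  by apply: ge_inf => //=; rewrite mulrA divff ?gt_eqF // mul1r.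
- rewrite -ler_pdivrMl //; apply: lb_le_inf; first by exists (c^-1 * a).
  move=> t /= At; rewrite ler_pdivrMl //; exact: ge_inf.
Qed.

Lemma meas_inf_family (S : R -> set R) (D : set R) : measurable D ->
  (forall v x, S v x -> 0 <= x) -> (forall s u, s <= u -> S u `<=` S s) ->
  measurable_fun D (fun v => inf (S v)).
Proof.
move=> mD S0 Smon.
apply: (measurability (@RGenCInfty.G R)) => [|/= _ [_] [r] -> <-].
  exact: RGenCInfty.measurableE.
have [r0|r0] := leP r 0.
  rewrite (_ : _ @^-1` _ = setT) ?setIT //.
  apply/seteqP; split => v //= _; rewrite in_itv /= andbT.
  exact: (le_trans r0 (inf_ge0_gen _ (S0 v))).
apply: measurableI => //; apply: is_interval_measurable => s t /=.
rewrite !in_itv /= !andbT => fs ft u /andP[su ut].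
have Ht : S t !=set0.
  apply/set0P/negP => /eqP St0; move: ft; rewrite St0 inf0 => ft.
  by move: (lt_le_trans r0 ft); rewrite ltxx.
have Hu : S u !=set0 by case: Ht => x /(Smon _ _ ut) Sx; exists x.
rewrite in_itv /= andbT; apply: le_trans fs _.
exact: le_inf_sub _ _ (Smon _ _ su) Hu (S0 s).
Qed.

End H.


Section Main.
Context {R : realType} {m T : nat} {J : finType}
    (r : J -> nat) (d : J -> 'I_m -> 'I_m -> nat)
    (y : J -> {set triple m T} -> R).

Lemma tr_ge0 : lp_feasible r d y -> forall j i o tau, 0 <= transferred r d y j i o tau.
Proof.
case=> y0 _ _ _ j i o tau; rewrite /transferred /Rintegral; apply: fine_ge0.
apply: integral_ge0 => x _; rewrite lee_fin /sigma; apply: sumr_ge0 => t _.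
case: ifP => _ //; rewrite /xval; apply: sumr_ge0 => F /andP[cF _]; exact: y0.
Qed.

Definition Sset j v := [set tau : R | 0 <= tau /\
        forall i o : 'I_m, v * (d j i o)%:R <= transferred r d y j i o tau].

Lemma Sset0 j v x : Sset j v x -> 0 <= x.
Proof. by case. Qed.

Lemma Ctilde_eq j v : Ctilde r d y j v = inf (Sset j v).
Proof. by []. Qed.

Lemma Cstretch_eq j lam : 0 < lam -> Cstretch r d y lam j = lam^-1 * Ctilde r d y j lam.
Proof.
move=> l0; rewrite Ctilde_eq -inf_scale //; last exact: Sset0.
rewrite /Cstretch; congr inf; apply/seteqP; split => tau /= [t0 H]; split.
- by rewrite pmulr_rge0.
- by move=> i o; rewrite -ler_pdivlMl.
- by rewrite -(pmulr_rge0 _ l0).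
- by move=> i o; rewrite ler_pdivlMl.
Qed.

Lemma Ctilde0 j : lp_feasible r d y -> Ctilde r d y j 0 = 0.
Proof.
move=> fe; rewrite Ctilde_eq; apply/le_anti/andP; split; last by apply: inf_ge0_gen => x [].
apply: ge_inf; first by exists 0 => z /Sset0.
split => // i o; rewrite mul0r; exact: tr_ge0 fe _ _ _ _.
Qed.

Lemma Ctilde_meas j : measurable_fun (`[0%R, 1%R] : set R) (Ctilde r d y j).
Proof.
apply: (meas_inf_family (Sset j)) => //.
- by move=> v x /Sset0.
- move=> s u su tau [t0 H]; split => // i o; apply: le_trans (H i o).
  by apply: ler_wpM2r.
Qed.

End Main.

Theorem lemma2 (R : realType) (m T : nat) (J : finType)
    (w : J -> R) (r : J -> nat) (d : J -> 'I_m -> 'I_m -> nat)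
    (y : J -> {set triple m T} -> R) :
  (0 < T)%N ->
  (forall j, 0 <= w j) ->
  lp_optimal w r d y ->
  (\int[lebesgue_measure]_(lam in `[0%R, 1%R] : set R)
      ((2 * lam) * \sum_(j : J) w j * Cstretch r d y lam j)%:E
   <= 2%:E * \sum_(j : J) (w j)%:E *
        \int[lebesgue_measure]_(v in `[0%R, 1%R] : set R) (Ctilde r d y j v)%:E)%E.
Proof.
move=> _ w0 [fe _].
have C0 j v : 0 <= Ctilde r d y j v by rewrite Ctilde_eq; apply: inf_ge0_gen; by move=> x [].
have -> : (\int[lebesgue_measure]_(lam in `[0%R, 1%R] : set R)
      ((2 * lam) * \sum_(j : J) w j * Cstretch r d y lam j)%:E =
   \int[lebesgue_measure]_(lam in `[0%R, 1%R] : set R)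
      (2%:E * \sum_(j : J) ((w j)%:E * (Ctilde r d y j lam)%:E)))%E.
  apply: eq_integral.
  move=> lam; rewrite inE /= in_itv /= => /andP[l0 l1].
  have -> : (2 * lam) * \sum_(j : J) w j * Cstretch r d y lam j
          = 2 * \sum_(j : J) w j * Ctilde r d y j lam.
    have [->|lp] := eqVneq lam 0.
      rewrite mulr0 mul0r big1 ?mulr0 // => j _.
      by rewrite (Ctilde0 _ _ _ _ fe) mulr0.
    have lp' : 0 < lam by rewrite lt_neqAle eq_sym lp l0.
    rewrite -mulrA; congr (2 * _); rewrite mulr_sumr; apply: eq_bigr => j _.
    by rewrite Cstretch_eq // mulrCA (mulrA lam) mulfV ?gt_eqF // mul1r.
  rewrite EFinM -sumEFin; congr (_ * _)%E; apply: eq_bigr => j _; by rewrite EFinM.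
have mC j : measurable_fun (`[0%R, 1%R] : set R) (fun x => (Ctilde r d y j x)%:E).
  by apply/measurable_EFinP; apply: Ctilde_meas.
rewrite ge0_integralZl_EFin //; last first.

- apply: emeasurable_sum => j; exact: measurable_funeM (mC j).
- move=> x _; apply: sume_ge0 => j _; apply: mule_ge0; rewrite lee_fin //.
rewrite ge0_integral_sum //; last first.
- move=> j x _; apply: mule_ge0; rewrite lee_fin //.
- move=> j; exact: measurable_funeM (mC j).
rewrite le_eqVlt; apply/orP; left; apply/eqP; congr (_ * _)%E.
apply: eq_bigr => j _; rewrite ge0_integralZl_EFin //.
- by move=> x _; rewrite lee_fin.
- exact: mC.
Qed.
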